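(* For positive integers $m,n$ and $h$ with $m \ge h$ and $n\ge h$, \[ \sum_{k=0}^{h} q^{(n-k)(h-k)} \left( \overline{{ n \brack k}}_{q,t} \overline{{ m \brack h-k}}_{q,t} + t\, \overline{{ n-1 \brack k}}_{q,t} \overline{{ m-1 \brack h-k-1}}_{q,t} \right) = \overline{ {m+n \brack h}}_{q,t}. \]
   Context: An overpartition is a partition in which the last occurrence of each distinct part size may be overlined; its weight $|\lambda|$ is the sum of its parts. For integers $0\le b\le a$, $\overline{{a \brack b}}_{q,t}=\sum_{\lambda} t^{\#_o(\lambda)} q^{|\lambda|}$, the sum over all overpartitions $\lambda$ with largest part at most $a-b$ and at most $b$ parts, $\#_o(\lambda)$ being the number of overlined parts; for other integer pairs $(a,b)$ (e.g. $b<0$ or $b>a$) it is $0$. *)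

(* Defs.v *)
From mathcomp Require Import all_boot all_order all_algebra.
Set Implicit Arguments. Unset Strict Implicit. Unset Printing Implicit Defensive.
Import Order.TTheory GRing.Theory Num.Theory.
Local Open Scope ring_scope.

(* An overpartition with all parts in {1..N} is encoded by its multiplicity
   function m : 'I_N -> nat (part size i.+1 occurs m i times) together with
   overline flags o : 'I_N -> bool, where o i means that (the last occurrence
   of) part i.+1 is overlined; this is only allowed if m i > 0.
   "At most b parts" means \sum_i m i <= b (hence each m i <= b, so m can be
   taken in 'I_b.+1). *)
Definition ovgauss_nat (R : comRingType) (q t : R) (N b : nat) : R :=
  \sum_(p : {ffun 'I_N -> 'I_b.+1} * {ffun 'I_N -> bool}
         | ((\sum_(i < N) (p.1 i : nat))%N <= b)%N
           && [forall i, p.2 i ==> (0 < p.1 i)%N])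
     t ^+ #|[set i | p.2 i]| * q ^+ (\sum_(i < N) (i.+1 * p.1 i))%N.

(* overline{[a, b]}_{q,t}: overpartitions with largest part <= a - b and at
   most b parts when 0 <= b <= a; zero for all other integer pairs. *)
Definition ovgauss (R : comRingType) (q t : R) (a b : int) : R :=
  if (0 <= b) && (b <= a) then ovgauss_nat q t `|a - b|%N `|b|%N else 0.

(* Main.v *)
Require Import Defs.
From mathcomp Require Import all_boot all_order all_algebra zify ring.
Set Implicit Arguments. Unset Strict Implicit. Unset Printing Implicit Defensive.
Import Order.TTheory GRing.Theory Num.Theory.
Local Open Scope ring_scope.

Definition Hs (R : comRingType) (q t : R) (c N b : nat) : R :=
  \sum_(p : {ffun 'I_N -> 'I_c.+1} * {ffun 'I_N -> bool}
         | ((\sum_(i < N) (p.1 i : nat))%N <= b)%N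
           && [forall i, p.2 i ==> (0 < p.1 i)%N])
     t ^+ #|[set i | p.2 i]| * q ^+ (\sum_(i < N) (i.+1 * p.1 i))%N.

Definition ext (T : Type) N (f : {ffun 'I_N -> T}) (x : T) : {ffun 'I_N.+1 -> T} :=
  [ffun i => if unlift ord_max i is Some j then f j else x].
Definition restr (T : Type) N (f : {ffun 'I_N.+1 -> T}) : {ffun 'I_N -> T} :=
  [ffun j => f (lift ord_max j)].

Lemma ext_lift T N (f : {ffun 'I_N -> T}) x j : ext f x (lift ord_max j) = f j.
Proof. by rewrite ffunE liftK. Qed.
Lemma ext_max T N (f : {ffun 'I_N -> T}) x : ext f x ord_max = x.
Proof. by rewrite ffunE unlift_none. Qed.
Lemma ext_widen T N (f : {ffun 'I_N -> T}) x j : ext f x (widen_ord (leqnSn N) j) = f j.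
Proof.
have -> : widen_ord (leqnSn N) j = lift ord_max j by apply: ord_inj; rewrite lift_max.
exact: ext_lift.
Qed.
Lemma restrK T N (f : {ffun 'I_N.+1 -> T}) : ext (restr f) (f ord_max) = f.
Proof.
apply/ffunP => i; rewrite ffunE; case: unliftP => [j ->|->] //.
by rewrite ffunE.
Qed.
Lemma extK T N (f : {ffun 'I_N -> T}) x : restr (ext f x) = f.
Proof. by apply/ffunP => j; rewrite ffunE ext_lift. Qed.

Lemma sum_ext N c (f : {ffun 'I_N -> 'I_c}) x :
  (\sum_(i < N.+1) (ext f x i : nat) = \sum_(i < N) (f i : nat) + x)%N.
Proof. by rewrite big_ord_recr /= ext_max; under eq_bigr do rewrite ext_widen. Qed.
Lemma wsum_ext N c (f : {ffun 'I_N -> 'I_c}) x :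
  (\sum_(i < N.+1) (i.+1 * ext f x i) = \sum_(i < N) (i.+1 * f i) + N.+1 * x)%N.
Proof. by rewrite big_ord_recr /= ext_max; under eq_bigr do rewrite ext_widen. Qed.
Lemma card_sum (T : finType) (P : pred T) : #|[set i | P i]| = (\sum_i (P i : nat))%N.
Proof.
rewrite -sum1_card big_mkcond /=; apply: eq_bigr => i _; rewrite inE; by case: (P i).
Qed.
Lemma card_ext N (o : {ffun 'I_N -> bool}) y :
  #|[set i | ext o y i]| = (#|[set i | o i]| + y)%N.
Proof. by rewrite !card_sum big_ord_recr /= ext_max; under eq_bigr do rewrite ext_widen. Qed.
Lemma forall_ext N c (f : {ffun 'I_N -> 'I_c}) x (o : {ffun 'I_N -> bool}) y :
  [forall i, ext o y i ==> (0 < ext f x i)%N] =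
  [forall i, o i ==> (0 < f i)%N] && (y ==> (0 < x)%N).
Proof.
apply/forallP/andP => [H|[/forallP H1 H2] i].
  split; last by have := H ord_max; rewrite !ext_max.
  by apply/forallP => j; have := H (lift ord_max j); rewrite !ext_lift.
case: (unliftP ord_max i) => [j ->|->]; first by rewrite !ext_lift.
by rewrite !ext_max.
Qed.

Lemma Hs_split (R : comRingType) (q t : R) c N b :
  Hs q t c N.+1 b = \sum_(x < c.+1 | (x <= b)%N)
     q ^+ (N.+1 * x) * (1 + (if (0 < x)%N then t else 0)) * Hs q t c N (b - x).
Proof.
rewrite /Hs.
pose FT := ({ffun 'I_N -> 'I_c.+1} * {ffun 'I_N -> bool})%type.
pose h := fun z : FT * ('I_c.+1 * bool) =>
   (ext z.1.1 z.2.1, ext z.1.2 z.2.2).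
rewrite (reindex h) /=; last first.
  exists (fun P => ((restr P.1, restr P.2), (P.1 ord_max, P.2 ord_max))).
    by move=> [[f o] [x y]] _; rewrite /h /= !extK !ext_max.
  by move=> [f o] _; rewrite /h /= !restrK.
rewrite big_mkcond /=.
pose E (p : FT) (xy : 'I_c.+1 * bool) :=
  if ((\sum_(i < N) (p.1 i : nat) + xy.1)%N <= b)%N &&
      ([forall i, p.2 i ==> (0 < p.1 i)%N] && (xy.2 ==> (0 < xy.1)%N))
   then t ^+ (#|[set i | p.2 i]| + xy.2) * q ^+ (\sum_(i < N) (i.+1 * p.1 i) + N.+1 * xy.1)%N else 0.
transitivity (\sum_(z : FT * ('I_c.+1 * bool)) E z.1 z.2).
  apply: eq_bigr => -[[f o] [x y]] _.
  by rewrite /E /h /= sum_ext wsum_ext card_ext forall_ext.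
rewrite -(pair_bigA _ E) exchange_big /=.
rewrite -(pair_bigA _ (fun x y => \sum_(p : FT) E p (x, y))) /=.
rewrite [RHS]big_mkcond /=; apply: eq_bigr => x _.
rewrite big_bool /=.
case: (leqP x b) => xb; last first.
  rewrite !big1 ?addr0 // => p _; rewrite /E /=; case: ifP => // /andP[H _];
  by move: xb; rewrite ltnNge (leq_trans (leq_addl _ _) H).
rewrite [in RHS]big_mkcond [in RHS]mulr_sumr -big_split /=; apply: eq_bigr => p _.
rewrite /E /= [(_ + x)%N]addnC -leq_subRL //.
set A := (_ <= b - x)%N; set B := [forall _, _].
case: A; case: B; case: (posnP x) => x0; rewrite ?x0 /= ?addr0 ?mulr0 ?addn1 ?addn0 ?exprS ?exprD ?expr0 //; ring.
Qed.

Lemma Hs0 (R : comRingType) (q t : R) c b : Hs q t c 0 b = 1.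
Proof.
rewrite /Hs (eq_bigl xpredT); last first.
  by move=> p; rewrite big_ord0 /=; apply/forallP => -[].
rewrite (eq_bigr (fun _ => 1)); last first.
  move=> p _; rewrite (_ : [set i | p.2 i] = set0) ?cards0 ?big_ord0 ?expr0 ?mulr1 //.
  by apply/setP => -[].
by rewrite sumr_const card_prod !card_ffun !card_ord.
Qed.

Definition W (R : comRingType) (q t : R) N x := q ^+ (N.+1 * x) * (1 + (if (0 < x)%N then t else 0)).

Lemma Hs_step (R : comRingType) (q t : R) N :
  (forall b c, (b <= c)%N -> Hs q t c N b = Hs q t b N b) ->
  forall b c, (b <= c)%N ->
  Hs q t c N.+1 b = \sum_(x < b.+1) W q t N x * Hs q t (b - x) N (b - x).
Proof.
move=> IH b c bc; rewrite Hs_split [RHS](big_ord_widen c.+1 (fun x : nat => W q t N x * Hs q t (b - x) N (b - x))) /=; last by rewrite ltnS.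
apply: eq_big => x; first by rewrite ltnS.
by move=> _; rewrite IH // leq_subLR (leq_trans bc) // leq_addl.
Qed.

Lemma Hs_indep (R : comRingType) (q t : R) N :
  forall b c, (b <= c)%N -> Hs q t c N b = Hs q t b N b.
Proof.
elim: N => [|N IH] b c bc; first by rewrite !Hs0.
by rewrite (Hs_step IH bc) (Hs_step IH (leqnn b)).
Qed.

Lemma G_rec (R : comRingType) (q t : R) N b :
  ovgauss_nat q t N.+1 b = \sum_(x < b.+1) W q t N x * ovgauss_nat q t N (b - x).
Proof. exact: (Hs_step (@Hs_indep R q t N) (leqnn b)). Qed.

Lemma G0b (R : comRingType) (q t : R) b : ovgauss_nat q t 0 b = 1.
Proof. exact: Hs0. Qed.

Lemma GN0 (R : comRingType) (q t : R) N : ovgauss_nat q t N 0 = 1.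
Proof.
elim: N => [|N IH]; first exact: G0b.
by rewrite G_rec big_ord1 /W /= IH muln0 expr0 mul1r addr0 mulr1.
Qed.

Lemma G_R1 (R : comRingType) (q t : R) N b :
  ovgauss_nat q t N.+1 b.+1 = ovgauss_nat q t N b.+1
     + q ^+ N.+1 * (ovgauss_nat q t N.+1 b + t * ovgauss_nat q t N b).
Proof.
rewrite !G_rec big_ord_recl /= subn0 /W /= muln0 expr0 mul1r addr0 mul1r.
congr (_ + _).
rewrite [LHS]big_ord_recl [X in _ = _ * (X + _)]big_ord_recl /=.
set G := ovgauss_nat q t N.
have -> : \sum_(i < b) q ^+ (N.+1 * bump 0 (bump 0 i))%N * (1 + t) * G (b.+1 - bump 0 (bump 0 i))%N
   = q ^+ N.+1 * \sum_(i < b) q ^+ (N.+1 * bump 0 i)%N * (1 + (if (0 < bump 0 i)%N then t else 0)) * G (b - bump 0 i)%N.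
  rewrite mulr_sumr; apply: eq_bigr => i _; rewrite /bump /= !add1n subSS.
  by rewrite mulnS exprD !mulrA.
rewrite /bump /= add1n subSS muln1 !subn0 muln0 expr0 mul1r addr0 mul1r.
ring.
Qed.



Lemma ovg_nat (R : comRingType) (q t : R) (a b : nat) :
  ovgauss q t a%:Z b%:Z = if (b <= a)%N then ovgauss_nat q t (a - b) b else 0.
Proof.
rewrite /ovgauss lez_nat le0z_nat /=; case: ifP => // ba.
by rewrite subzn // absz_nat.
Qed.

Lemma ovg_lt0 (R : comRingType) (q t : R) (a b : int) : b < 0 -> ovgauss q t a b = 0.
Proof. by rewrite /ovgauss => /lt_geF ->. Qed.

Lemma ovg_gt (R : comRingType) (q t : R) (a b : int) : a < b -> ovgauss q t a b = 0.
Proof. by rewrite /ovgauss => /lt_geF ->; rewrite andbF. Qed.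

Lemma ovg_R1 (R : comRingType) (q t : R) (a : nat) (B : int) :
  ovgauss q t a.+1%:Z B = ovgauss q t a%:Z B
    + q ^+ `|a.+1%:Z - B| * (ovgauss q t a%:Z (B - 1) + t * ovgauss q t (a%:Z - 1) (B - 1)).
Proof.
case: (ltrP B 0) => B0.
  have B1 : B - 1 < 0 by lia.
  by rewrite (ovg_lt0 q t a.+1 B0) (ovg_lt0 q t a B0) (ovg_lt0 q t a B1) (ovg_lt0 q t (a%:Z - 1) B1) ?(mulr0, addr0).
have [b ->] : exists b : nat, B = b%:Z by exists `|B|%N; lia.
case: b B0 => [|b] _.
  rewrite (ovg_lt0 _ _ _ (_ : 0%:Z - 1 < 0)) // (ovg_lt0 _ _ _ (_ : 0%:Z - 1 < 0)) //.
  by rewrite !ovg_nat !GN0 /= ?mulr0 ?addr0 ?mulr0 ?addr0.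
have -> : b.+1%:Z - 1 = b%:Z by lia.
case: (ltnP a b) => ab.
  have H1 : a.+1%:Z < b.+1%:Z by lia.
  have H2 : a%:Z < b.+1%:Z by lia.
  have H3 : a%:Z < b%:Z by lia.
  have H4 : a%:Z - 1 < b%:Z by lia.
  by rewrite (ovg_gt q t H1) (ovg_gt q t H2) (ovg_gt q t H3) (ovg_gt q t H4) ?(mulr0, addr0).
case: (leqP a b) => ab'.
  have -> : a = b by apply/eqP; rewrite eqn_leq ab ab'.
  have H1 : b%:Z < b.+1%:Z by lia.
  have H2 : b%:Z - 1 < b%:Z by lia.
  rewrite (ovg_gt q t H1) (ovg_gt q t H2).
  rewrite !ovg_nat !leqnn !subnn !G0b mulr0 addr0 add0r.
  have -> : `|b.+1%:Z - b.+1%:Z|%N = 0%N by lia.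
  by rewrite expr0 mul1r.
have [N ->] : exists N, a = (b + N.+1)%N by exists (a - b).-1; lia.
have -> : (b + N.+1)%:Z - 1 = (b + N)%:Z by lia.
have -> : `|(b + N.+1).+1%:Z - b.+1%:Z|%N = N.+1 by lia.
rewrite !ovg_nat.
have c1 : (b.+1 <= (b + N.+1).+1)%N by lia.
have c2 : (b.+1 <= b + N.+1)%N by lia.
have c3 : (b <= b + N.+1)%N by lia.
have c4 : (b <= b + N)%N by lia.
rewrite c1 c2 c3 c4.
have -> : ((b + N.+1).+1 - b.+1 = N.+1)%N by lia.
have -> : ((b + N.+1) - b.+1 = N)%N by lia.
have -> : ((b + N.+1) - b = N.+1)%N by lia.
have -> : ((b + N) - b = N)%N by lia.
exact: G_R1.
Qed.

Definition T (R : comRingType) (q t : R) (n m h k : nat) : R :=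
  q ^+ ((n - k) * (h - k))%N *
     (ovgauss q t n%:Z k%:Z * ovgauss q t m%:Z (h%:Z - k%:Z)
      + t * (ovgauss q t (n%:Z - 1) k%:Z * ovgauss q t (m%:Z - 1) (h%:Z - k%:Z - 1))).

Lemma T_step (R : comRingType) (q t : R) n m h k :
  T q t n m.+2 h.+1 k = T q t n m.+1 h.+1 k
    + q ^+ `|(m.+1 + n).+1%:Z - h.+1%:Z| * (T q t n m.+1 h k + t * T q t n m h k).
Proof.
rewrite /T.
have e2 : h%:Z - k%:Z - 1 = h.+1%:Z - k%:Z - 1 - 1 by lia.
have e1 : h%:Z - k%:Z = h.+1%:Z - k%:Z - 1 by lia.
have e3 : m.+2%:Z - 1 = m.+1%:Z by lia.
have e4 : m.+1%:Z - 1 = m%:Z by lia.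
rewrite e2 e1 e3 e4.
set d := h.+1%:Z - k%:Z.
rewrite [in LHS](ovg_R1 q t m (d - 1)) [in LHS](ovg_R1 q t m.+1 d).
have -> : absz ((m.+1%:Z - (d - 1))%R) = absz ((m.+2%:Z - d)%R) by rewrite /d; lia.
set P := ovgauss q t n%:Z k%:Z.
set P' := ovgauss q t (n%:Z - 1) k%:Z.
set X1 := ovgauss q t m.+1%:Z d.
set X2 := ovgauss q t m.+1%:Z (d - 1).
set X3 := ovgauss q t m%:Z (d - 1).
set X4 := ovgauss q t m%:Z (d - 1 - 1).
set X5 := ovgauss q t (m%:Z - 1) (d - 1 - 1).
rewrite e4 -/X3.
set e := absz ((m.+2%:Z - d)%R).
set E := absz (((m.+1 + n).+1%:Z - h.+1%:Z)%R).
set a := ((n - k) * (h.+1 - k))%N.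
set a' := ((n - k) * (h - k))%N.
set Z := P * X2 + t * P * X3 + t * P' * X4 + t * t * P' * X5.
have key : q ^+ a * q ^+ e * Z = q ^+ E * q ^+ a' * Z.
  case: (leqP k n) => kn; last first.
    have H1 : n%:Z < k%:Z by lia.
    have H2 : n%:Z - 1 < k%:Z by lia.
    by rewrite /Z /P /P' (ovg_gt q t H1) (ovg_gt q t H2) !(mulr0, mul0r, addr0).
  case: (ltP d 1) => d1.
    have H1 : d - 1 < 0 by lia.
    have H2 : d - 1 - 1 < 0 by lia.
    by rewrite /Z /X2 /X3 /X4 /X5 !(ovg_lt0 _ _ _ H1) !(ovg_lt0 _ _ _ H2) !(mulr0, mul0r, addr0).
  case: (ltP (m.+2%:Z) d) => dm.
    have H1 : m.+1%:Z < d - 1 by lia.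
    have H2 : m%:Z < d - 1 by lia.
    have H3 : m%:Z < d - 1 - 1 by lia.
    have H4 : m%:Z - 1 < d - 1 - 1 by lia.
    by rewrite /Z /X2 /X3 /X4 /X5 (ovg_gt q t H1) (ovg_gt q t H2) (ovg_gt q t H3) (ovg_gt q t H4) !(mulr0, mul0r, addr0).
  have kh : (k <= h)%N by rewrite /d in d1; lia.
  have ea : a = (a' + (n - k))%N by rewrite /a /a' subSn // mulnS addnC.
  have : (a + e = E + a')%N by rewrite ea /e /E /d; rewrite /d in d1 dm; lia.
  by rewrite -!exprD => ->.
apply/eqP; rewrite -subr_eq0; apply/eqP.
transitivity (q ^+ a * q ^+ e * Z - q ^+ E * q ^+ a' * Z); last by rewrite key subrr.
rewrite /Z; ring.
Qed.

Definition S (R : comRingType) (q t : R) (n m h : nat) : R :=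
  \sum_(k < h.+1) T q t n m h k.

Lemma ovg_na (R : comRingType) (q t : R) (a b : int) : a < 0 -> ovgauss q t a b = 0.
Proof. move=> a0; case: (ltP b 0) => b0; [exact: ovg_lt0 | apply: ovg_gt; lia]. Qed.

Lemma ovg00 (R : comRingType) (q t : R) : ovgauss q t 0%:Z 0%:Z = 1.
Proof. by rewrite ovg_nat G0b. Qed.

Lemma ovgn0 (R : comRingType) (q t : R) (n : nat) : ovgauss q t n%:Z 0%:Z = 1.
Proof. by rewrite ovg_nat GN0. Qed.

Lemma T_last (R : comRingType) (q t : R) n m h : T q t n m h h.+1 = 0.
Proof.
rewrite /T.
have H1 : h%:Z - h.+1%:Z < 0 by lia.
have H2 : h%:Z - h.+1%:Z - 1 < 0 by lia.
by rewrite (ovg_lt0 _ _ _ H1) (ovg_lt0 _ _ _ H2) !(mulr0, addr0).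
Qed.

Lemma S_ext (R : comRingType) (q t : R) n m h :
  \sum_(k < h.+2) T q t n m h k = S q t n m h.
Proof. by rewrite big_ord_recr /= T_last addr0. Qed.

Lemma S_h0 (R : comRingType) (q t : R) n m : S q t n m 0 = ovgauss q t (m + n)%N%:Z 0%:Z.
Proof.
rewrite /S big_ord1 /T /=.
have H : 0%:Z - 0%:Z - 1 < 0 by lia.
rewrite (ovg_lt0 _ _ _ H) muln0 expr0 mul1r mulr0 mulr0 addr0.
have -> : 0%:Z - 0%:Z = 0%:Z by [].
by rewrite !ovgn0 mulr1.
Qed.

Lemma S_m0 (R : comRingType) (q t : R) n h : S q t n 0 h = ovgauss q t (0 + n)%N%:Z h%:Z.
Proof.
rewrite /S big_ord_recr /= big1 ?add0r.
  rewrite /T subnn muln0 expr0 mul1r subrr ovg00 mulr1.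
  have H : 0%:Z - 1 < 0 by lia.
  by rewrite (ovg_na _ _ _ H) !(mulr0, addr0).
move=> [k kh] _ /=.
have H1 : 0%:Z < h%:Z - k%:Z by lia.
have H : 0%:Z - 1 < 0 by lia.
by rewrite /T (ovg_gt _ _ H1) (ovg_na _ _ _ H) !(mulr0, addr0).
Qed.

Lemma S_m1 (R : comRingType) (q t : R) n h : S q t n 1 h = ovgauss q t (1 + n)%N%:Z h%:Z.
Proof.
case: h => [|h]; first exact: S_h0.
rewrite /S big_ord_recr big_ord_recr /= big1 ?add0r; last first.
  move=> [k kh] _ /=.
  have H1 : 1%:Z < h.+1%:Z - k%:Z by lia.
  have H2 : 1%:Z - 1 < h.+1%:Z - k%:Z - 1 by lia.
  by rewrite /T (ovg_gt _ _ H1) (ovg_gt _ _ H2) !(mulr0, addr0).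
rewrite /T.
have -> : h.+1%:Z - h%:Z = 1%:Z by lia.
have -> : 1%:Z - 1 = 0%:Z by lia.
have -> : h.+1%:Z - h.+1%:Z = 0%:Z by lia.
have H : 0%:Z - 1 < 0 by lia.
rewrite (ovg_lt0 _ _ _ H) subnn muln0 expr0 mul1r subSnn muln1 !ovgn0.
rewrite (ovg_nat q t 1 1) /= G0b !(mulr1, mulr0, addr0).
rewrite add1n ovg_R1.
have -> : h.+1%:Z - 1 = h%:Z by lia.
rewrite addrC; congr (_ + _).
case: (leqP h n) => hn.
  by have -> : absz ((n.+1%:Z - h.+1%:Z)%R) = (n - h)%N by lia.
have H1 : n%:Z < h%:Z by lia.
have H2 : n%:Z - 1 < h%:Z by lia.
by rewrite (ovg_gt _ _ H1) (ovg_gt _ _ H2) !(mulr0, addr0).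
Qed.

Lemma S_all (R : comRingType) (q t : R) n m h : S q t n m h = ovgauss q t (m + n)%N%:Z h%:Z.
Proof.
move: h; suff: (forall h, S q t n m h = ovgauss q t (m + n)%N%:Z h%:Z) /\
                (forall h, S q t n m.+1 h = ovgauss q t (m.+1 + n)%N%:Z h%:Z).
  by case.
move: m.
elim=> [|m [IH1 IH2]]; first by split => h; [exact: S_m0 | exact: S_m1].
split => // -[|h]; first exact: S_h0.
rewrite /S; under eq_bigr do rewrite T_step.
rewrite big_split /= -[\sum_(i < h.+2) T q t n m.+1 h.+1 i]/(S q t n m.+1 h.+1) -mulr_sumr big_split /= -mulr_sumr.
rewrite !S_ext IH2 IH2 IH1.
change (m.+2 + n)%N with (m.+1 + n).+1.
rewrite ovg_R1.
have -> : h.+1%:Z - 1 = h%:Z by lia.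
by have -> : (m.+1 + n)%N%:Z - 1 = (m + n)%N%:Z by lia.
Qed.

Unset Implicit Arguments.

Theorem proposition4p2 (R : comRingType) (q t : R) (m n h : nat) :
  (0 < m)%N -> (0 < n)%N -> (0 < h)%N -> (h <= m)%N -> (h <= n)%N ->
  \sum_(k < h.+1)
     q ^+ ((n - k) * (h - k))%N *
     (ovgauss q t n%:Z k%:Z * ovgauss q t m%:Z (h%:Z - k%:Z)
      + t * (ovgauss q t (n%:Z - 1) k%:Z * ovgauss q t (m%:Z - 1) (h%:Z - k%:Z - 1)))
  = ovgauss q t (m + n)%N%:Z h%:Z.
Proof. by move=> _ _ _ _ _; exact: (S_all q t n m h). Qed.
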